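(* Let $P\subset\mathbb R^d$ be a $d$-polytope and $S$ a simplex facet of $P$ in bounded position. Then for any two disjoint sets $\mathcal F,\mathcal N\subseteq\operatorname{adj}(S)$ the set $V_S(\mathcal F,\mathcal N;P)$ is nonempty.
   Context: For a facet $F$ of $P$ let $H_F=\{x:\langle x,a_F\rangle=\ell_F\}$ be its affine hull, oriented so that $P\subseteq\{x:\langle x,a_F\rangle\geq\ell_F\}$; $H_F^+=\{x:\langle x,a_F\rangle>\ell_F\}$, $H_F^-=\{x:\langle x,a_F\rangle<\ell_F\}$. Two facets are adjacent if they share a ridge; $\operatorname{adj}(S)$ is the set of facets adjacent to $S$. A simplex facet is a facet combinatorially equivalent to a $(d-1)$-simplex. $S$ is in bounded position if for every set of $d$ facets in $\operatorname{adj}(S)$ their hyperplanes meet in a point of $H_S^-$. $V_S(\mathcal F,\mathcal N;P)$ is the set of points lying in $H_F^-$ for $F\in\mathcal N\cup\{S\}$, in $H_F$ for $F\in\mathcal F$, and in $H_F^+$ for all other facets $F$ of $P$. *)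

(* Defs.v *)
From mathcomp Require Import all_boot all_order all_algebra.
From mathcomp Require Import reals.
Set Implicit Arguments. Unset Strict Implicit. Unset Printing Implicit Defensive.
Import Order.TTheory GRing.Theory Num.Theory.
Local Open Scope ring_scope.

Definition pset (R : realType) (d : nat) := 'rV[R]_d -> Prop.

Definition dotv (R : realType) (d : nat) (x a : 'rV[R]_d) : R :=
  \sum_(i < d) x ord0 i * a ord0 i.

Definition in_conv (R : realType) (d n : nat) (p : 'I_n -> 'rV[R]_d)
  (x : 'rV[R]_d) : Prop :=
  exists w : 'I_n -> R, (forall i, 0 <= w i) /\ \sum_(i < n) w i = 1 /\
    x = \sum_(i < n) w i *: p i.

Definition aff_indep (R : realType) (d m : nat) (p : 'I_m -> 'rV[R]_d) : Prop :=
  forall c : 'I_m -> R, \sum_(i < m) c i = 0 ->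
    \sum_(i < m) c i *: p i = 0 -> forall i, c i = 0.

Definition has_aff_pts (R : realType) (d : nat) (A : pset R d) (m : nat) : Prop :=
  exists p : 'I_m -> 'rV[R]_d, (forall i, A (p i)) /\ aff_indep p.

(* affine dimension of A equals k - 1 (k = 0 : A empty) *)
Definition aff_rank (R : realType) (d : nat) (A : pset R d) (k : nat) : Prop :=
  has_aff_pts A k /\ ~ has_aff_pts A k.+1.

Definition is_polytope (R : realType) (d : nat) (P : pset R d) : Prop :=
  exists n (p : 'I_n -> 'rV[R]_d), forall x, P x <-> in_conv p x.

Definition is_d_polytope (R : realType) (d : nat) (P : pset R d) : Prop :=
  is_polytope P /\ aff_rank P d.+1.

Definition face_ineq (R : realType) (d : nat) (P F : pset R d)
  (a : 'rV[R]_d) (l : R) : Prop :=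
  a != 0 /\ (forall x, P x -> l <= dotv x a) /\
  (forall x, F x <-> (P x /\ dotv x a = l)).

Definition is_facet (R : realType) (d : nat) (P F : pset R d) : Prop :=
  (exists a l, face_ineq P F a l) /\ aff_rank F d.

(* Facets F and G are adjacent: they share a ridge, i.e. F ∩ G (a face)
   has dimension d-2. *)
Definition adjacent (R : realType) (d : nat) (F G : pset R d) : Prop :=
  aff_rank (fun x => F x /\ G x) d.-1.

(* H_F, H_F^-, H_F^+ for a facet F of P, with the orientation
   P ⊆ {<x,a_F> >= l_F}.  The pair (a_F,l_F) is determined by F up to a
   positive scalar, so we quantify over all such pairs. *)
Definition in_H (R : realType) (d : nat) (P F : pset R d) (x : 'rV[R]_d) : Prop :=
  forall a l, face_ineq P F a l -> dotv x a = l.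
Definition in_Hminus (R : realType) (d : nat) (P F : pset R d) (x : 'rV[R]_d) : Prop :=
  forall a l, face_ineq P F a l -> dotv x a < l.
Definition in_Hplus (R : realType) (d : nat) (P F : pset R d) (x : 'rV[R]_d) : Prop :=
  forall a l, face_ineq P F a l -> l < dotv x a.

Definition is_simplex_facet (R : realType) (d : nat) (P S : pset R d) : Prop :=
  is_facet P S /\
  exists p : 'I_d -> 'rV[R]_d, aff_indep p /\ (forall x, S x <-> in_conv p x).

Definition bounded_position (R : realType) (d : nat) (P S : pset R d) : Prop :=
  forall Fs : 'I_d -> pset R d, injective Fs ->
    (forall i, is_facet P (Fs i) /\ adjacent S (Fs i)) ->
    exists x, (forall i, in_H P (Fs i) x) /\ in_Hminus P S x.

Definition V_S (R : realType) (d : nat) (P S : pset R d)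
  (FF NN : pset R d -> Prop) (x : 'rV[R]_d) : Prop :=
  forall F, is_facet P F ->
    ((NN F \/ F = S) -> in_Hminus P F x) /\
    (FF F -> in_H P F x) /\
    ((~ NN F /\ F <> S /\ ~ FF F) -> in_Hplus P F x).

(* Main.v *)
Require Import Defs.
From mathcomp Require Import all_boot all_order all_algebra.
From mathcomp Require Import reals.
From mathcomp Require Import boolp ring lra.
Set Implicit Arguments. Unset Strict Implicit. Unset Printing Implicit Defensive.
Import Order.TTheory GRing.Theory Num.Theory.
Local Open Scope ring_scope.


Definition ev (R : realType) (d : nat) (z : 'cV[R]_(1 + d)) (x : 'rV[R]_d) : R :=
  (row_mx 1 x *m z) 0 0.

Lemma dotv_sum (R : realType) (d m : nat) (w : 'I_m -> R) (y : 'I_m -> 'rV[R]_d) a :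
  dotv (\sum_(k < m) w k *: y k) a = \sum_(k < m) w k * dotv (y k) a.
Proof.
rewrite /dotv.
under eq_bigr => i _ do rewrite summxE big_distrl /=.
rewrite exchange_big /=; apply: eq_bigr => k _; rewrite mulr_sumr.
by apply: eq_bigr => i _; rewrite mxE mulrA.
Qed.

Lemma evE (R : realType) (d : nat) (z : 'cV[R]_(1 + d)) x :
  ev z x = usubmx z 0 0 + dotv x (dsubmx z)^T.
Proof.
rewrite /ev -{1}(vsubmxK z) mul_row_col mul1mx mxE; congr (_ + _).
rewrite mxE /dotv; apply: eq_bigr => j _; by rewrite !mxE.
Qed.

Lemma ev_ineq (R : realType) (d : nat) (a : 'rV[R]_d) (l : R) x :
  ev (col_mx (- l)%:M a^T) x = dotv x a - l.
Proof.
by rewrite evE col_mxKu col_mxKd trmxK mxE /= mulr1n addrC.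
Qed.

Lemma evD (R : realType) (d : nat) (z1 z2 : 'cV[R]_(1 + d)) x :
  ev (z1 + z2) x = ev z1 x + ev z2 x.
Proof. by rewrite /ev mulmxDr mxE. Qed.

Lemma evZ (R : realType) (d : nat) (s : R) (z : 'cV[R]_(1 + d)) x :
  ev (s *: z) x = s * ev z x.
Proof. by rewrite /ev -scalemxAr mxE. Qed.

Lemma evN (R : realType) (d : nat) (z : 'cV[R]_(1 + d)) x :
  ev (- z) x = - ev z x.
Proof. by rewrite /ev mulmxN mxE. Qed.

Lemma ev_sum (R : realType) (d m : nat) (z : 'cV[R]_(1 + d)) (w : 'I_m -> R) y :
  \sum_(k < m) w k * ev z (y k) =
  (\sum_(k < m) w k) * usubmx z 0 0 + dotv (\sum_(k < m) w k *: y k) (dsubmx z)^T.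
Proof.
rewrite dotv_sum mulr_suml -big_split /=; apply: eq_bigr => k _.
by rewrite evE mulrDr.
Qed.

Lemma ev_comb (R : realType) (d m : nat) (z : 'cV[R]_(1 + d)) (w : 'I_m -> R) y :
  \sum_(k < m) w k = 1 ->
  ev z (\sum_(k < m) w k *: y k) = \sum_(k < m) w k * ev z (y k).
Proof. by move=> h; rewrite ev_sum h mul1r evE. Qed.

Lemma ev_lc (R : realType) (d m : nat) (z : 'cV[R]_(1 + d)) (c : 'I_m -> R) y :
  \sum_(k < m) c k = 0 -> \sum_(k < m) c k *: y k = 0 ->
  \sum_(k < m) c k * ev z (y k) = 0.
Proof.
move=> h1 h2; rewrite ev_sum h1 h2 mul0r add0r /dotv.
by apply: big1 => i _; rewrite mxE mul0r.
Qed.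

Definition Mx (R : realType) (d m : nat) (u : 'I_m -> 'rV[R]_d) : 'M[R]_(m, 1 + d) :=
  \matrix_k row_mx 1 (u k).

Lemma MxE (R : realType) (d m : nat) (u : 'I_m -> 'rV[R]_d) z k :
  (Mx u *m z) k 0 = ev z (u k).
Proof.
have := congr1 (fun M : 'M_(1, 1) => M 0 0) (row_mul k (Mx u) z).
by rewrite /Mx rowK mxE /= => ->.
Qed.

Lemma Mx_unit (R : realType) (d : nat) (u : 'I_d.+1 -> 'rV[R]_d) :
  aff_indep u -> (Mx u : 'M_(d.+1)) \in unitmx.
Proof.
move=> hu; rewrite -row_free_unit -kermx_eq0; apply/eqP/row_matrixP => i.
rewrite row0.
set c := row i (kermx (Mx u)).
have hc : c *m Mx u = 0 by rewrite /c -row_mul mulmx_ker row0.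
have key : forall j, c 0 j = 0.
  apply: (hu (fun j => c 0 j)).
  - have := congr1 (fun M : 'M_(1, 1 + d) => M 0 (lshift d (0 : 'I_1))) hc.
    rewrite !mxE => h; apply: etrans h; apply: eq_bigr => j _.
    by rewrite /Mx !mxE (unsplitK (inl _)) mxE mulr1.
  - apply/rowP => j.
    have := congr1 (fun M : 'M_(1, 1 + d) => M 0 (rshift 1 j)) hc.
    rewrite !mxE summxE => h; apply: etrans h; apply: eq_bigr => k _.
    by rewrite /Mx !mxE (unsplitK (inr _)).
apply/rowP => j; rewrite [RHS]mxE; exact: key j.
Qed.



Lemma ev_zero (R : realType) (d : nat) (u : 'I_d.+1 -> 'rV[R]_d) z :
  aff_indep u -> (forall k, ev z (u k) = 0) -> z = 0.
Proof.
move=> hu hz.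
have h0 : (Mx u : 'M_(d.+1)) *m z = 0.
  by apply/colP => k; rewrite MxE hz mxE.
by rewrite -(mulKmx (Mx_unit hu) z) h0 mulmx0.
Qed.

Lemma ev_interp (R : realType) (d : nat) (u : 'I_d.+1 -> 'rV[R]_d) (b : 'I_d.+1 -> R) :
  aff_indep u -> exists z, forall k, ev z (u k) = b k.
Proof.
move=> hu; exists (invmx (Mx u : 'M_(d.+1)) *m (\col_k b k)) => k.
by rewrite -MxE (mulKVmx (Mx_unit hu)) mxE.
Qed.

Definition snoc (T : Type) (m : nat) (y : 'I_m -> T) (z : T) (k : 'I_m.+1) : T :=
  if unlift ord_max k is Some j then y j else z.

Lemma snocL T m (y : 'I_m -> T) z j : snoc y z (lift ord_max j) = y j.
Proof. by rewrite /snoc liftK. Qed.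

Lemma snocM T m (y : 'I_m -> T) z : snoc y z ord_max = z.
Proof. by rewrite /snoc unlift_none. Qed.

Lemma sum_snoc (R : realType) m (F : 'I_m.+1 -> R) :
  \sum_(k < m.+1) F k = \sum_(j < m) F (lift ord_max j) + F ord_max.
Proof.
rewrite big_ord_recr /=; congr (_ + _); apply: eq_bigr => j _; congr F.
by apply: val_inj; rewrite /= /bump leqNgt ltn_ord.
Qed.

Lemma sumv_snoc (R : realType) d m (F : 'I_m.+1 -> 'rV[R]_d) :
  \sum_(k < m.+1) F k = \sum_(j < m) F (lift ord_max j) + F ord_max.
Proof.
rewrite big_ord_recr /=; congr (_ + _); apply: eq_bigr => j _; congr F.
by apply: val_inj; rewrite /= /bump leqNgt ltn_ord.
Qed.

Lemma aff_ext (R : realType) (d m : nat) (y : 'I_m -> 'rV[R]_d) z f :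
  aff_indep y -> (forall j, ev f (y j) = 0) -> ev f z != 0 ->
  aff_indep (snoc y z).
Proof.
move=> hy hf hz c hs hv.
have hl := ev_lc f hs hv.
rewrite sum_snoc big1 ?add0r in hl; last by move=> j _; rewrite snocL hf mulr0.
rewrite snocM in hl.
have cm : c ord_max = 0.
  by apply/eqP; move: hl => /eqP; rewrite mulf_eq0 (negbTE hz) orbF.
rewrite sum_snoc cm addr0 in hs.
rewrite sumv_snoc cm scale0r addr0 in hv.
have hc : forall j, c (lift ord_max j) = 0.
  apply: (hy (fun j => c (lift ord_max j))) => //.
  by rewrite -[RHS]hv; apply: eq_bigr => j _; rewrite snocL.
by move=> k; case: (unliftP ord_max k) => [j ->|->].
Qed.

Lemma aff_rep (R : realType) (d : nat) (q : 'I_d -> 'rV[R]_d) i p f :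
  aff_indep q -> (forall j, ev f (q j) = 0) -> ev f p != 0 ->
  aff_indep (fun j => if j == i then p else q j).
Proof.
move=> hq hf hp c hs hv.
have hl := ev_lc f hs hv.
rewrite (bigD1 i) //= eqxx big1 ?addr0 in hl; last first.
  by move=> j /negbTE ->; rewrite hf mulr0.
have ci : c i = 0.
  by apply/eqP; move: hl => /eqP; rewrite mulf_eq0 (negbTE hp) orbF.
apply: hq => //; rewrite -[RHS]hv; apply: eq_bigr => j _.
by case: eqP => [->|]; rewrite ?ci ?scale0r.
Qed.

Lemma aff_sub (R : realType) (d m : nat) (q : 'I_m.+1 -> 'rV[R]_d) i :
  aff_indep q -> aff_indep (fun j => q (lift i j)).
Proof.
move=> hq c hs hv.
pose c' k := if unlift i k is Some j then c j else 0.
have c'i : c' i = 0 by rewrite /c' unlift_none.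
have c'l : forall j, c' (lift i j) = c j by move=> j; rewrite /c' liftK.
have := hq c'.
rewrite (bigD1_ord i) //= c'i add0r.
under eq_bigr => j _ do rewrite c'l.
move=> /(_ hs); rewrite (bigD1_ord i) //= c'i scale0r add0r.
under eq_bigr => j _ do rewrite c'l.
by move=> /(_ hv) h j; rewrite -c'l h.
Qed.



Definition interp (R : realType) (d : nat) (u : 'I_d.+1 -> 'rV[R]_d) (b : 'I_d.+1 -> R) :=
  invmx (Mx u : 'M_(d.+1)) *m (\col_k b k).

Lemma interpE (R : realType) (d : nat) (u : 'I_d.+1 -> 'rV[R]_d) b k :
  aff_indep u -> ev (interp u b) (u k) = b k.
Proof. by move=> hu; rewrite -MxE (mulKVmx (Mx_unit hu)) mxE. Qed.

Lemma in_conv_pt (R : realType) (d n : nat) (p : 'I_n -> 'rV[R]_d) k :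
  in_conv p (p k).
Proof.
exists (fun j => (j == k)%:R); split; first by move=> j; rewrite ler0n.
split.
  by rewrite (bigD1 k) //= eqxx big1 ?addr0 // => j /negbTE ->.
by rewrite (bigD1 k) //= eqxx scale1r big1 ?addr0 // => j /negbTE ->; rewrite scale0r.
Qed.

Lemma conv_ev (R : realType) (d n : nat) (p : 'I_n -> 'rV[R]_d) z x :
  in_conv p x -> (forall k, 0 <= ev z (p k)) -> 0 <= ev z x.
Proof.
move=> [w [w0 [w1 ->]]] hk; rewrite ev_comb //.
by apply: sumr_ge0 => k _; apply: mulr_ge0.
Qed.

Lemma conv_ev0 (R : realType) (d n : nat) (p : 'I_n -> 'rV[R]_d) z z' x :
  in_conv p x -> (forall k, 0 <= ev z (p k)) -> ev z x = 0 ->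
  (forall k, ev z (p k) = 0 -> ev z' (p k) = 0) -> ev z' x = 0.
Proof.
move=> [w [w0 [w1 hx]]] hk; rewrite hx ev_comb // ev_comb // => h0 himp.
have := h0; move/eqP; rewrite psumr_eq0; last by move=> k _; apply: mulr_ge0.
move=> /allP hall; apply: big1 => k _.
have := hall k (mem_index_enum k); rewrite mulf_eq0 => /orP [/eqP ->|/eqP e].
  by rewrite mul0r.
by rewrite himp ?mulr0.
Qed.

Lemma evS (R : realType) (d m : nat) (Z : 'I_m -> 'cV[R]_(1 + d)) x :
  ev (\sum_(i < m) Z i) x = \sum_(i < m) ev (Z i) x.
Proof. by rewrite /ev mulmx_sumr summxE. Qed.

Lemma ev_const (R : realType) (d : nat) (z : 'cV[R]_(1 + d)) x y :
  (dsubmx z)^T = 0 -> ev z x = ev z y.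
Proof.
move=> h; rewrite !evE h /dotv.
by rewrite !big1 // => i _; rewrite mxE mulr0.
Qed.

Lemma ex_argmax (R : realType) n (P : pred 'I_n) (r : 'I_n -> R) k0 :
  P k0 -> exists k, P k /\ forall k', P k' -> r k' <= r k.
Proof.
move=> h; case: (arg_maxP r h) => k Pk hk; exists k; split => //.
Qed.



Lemma ev0 (R : realType) (d : nat) (x : 'rV[R]_d) : ev 0 x = 0.
Proof. by rewrite /ev mulmx0 mxE. Qed.

Lemma ineq_ev (R : realType) (d : nat) (P F : pset R d) a l :
  face_ineq P F a l ->
  [/\ col_mx (- l)%:M a^T != 0 :> 'cV[R]_(1 + d),
      forall x, P x -> 0 <= ev (col_mx (- l)%:M a^T) x &
      forall x, F x <-> (P x /\ ev (col_mx (- l)%:M a^T) x = 0)].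
Proof.
move=> [a0 [hv he]]; split.
- apply/eqP => h; move/eqP: a0; apply.
  have : a^T = 0.
    by move: (congr1 dsubmx h); rewrite col_mxKd => ->; apply/matrixP => i j; rewrite !mxE.
  by move/(congr1 trmx); rewrite trmxK => ->; apply/matrixP => i j; rewrite !mxE.
- by move=> x Px; rewrite ev_ineq subr_ge0; apply: hv.
- move=> x; rewrite he ev_ineq; split => -[Px h]; split => //.
    by rewrite h subrr.
  by apply/eqP; rewrite -subr_eq0 h.
Qed.

Lemma ev_ineq_face (R : realType) (d : nat) (P F : pset R d) (z : 'cV[R]_(1 + d)) :
  (dsubmx z)^T != 0 -> (forall x, P x -> 0 <= ev z x) ->
  (forall x, F x <-> (P x /\ ev z x = 0)) ->
  face_ineq P F (dsubmx z)^T (- usubmx z 0 0).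
Proof.
move=> a0 hv he; split => //; split.
  by move=> x Px; rewrite -subr_ge0 opprK addrC -evE; apply: hv.
move=> x; rewrite he evE; split => -[Px h]; split => //.
  by apply/eqP; rewrite -addr_eq0 addrC h.
by rewrite h subrr.
Qed.



Lemma main (R : realType) (d : nat) (P S : pset R d.+1)
  (FF NN : pset R d.+1 -> Prop) :
  is_d_polytope P ->
  is_simplex_facet P S ->
  bounded_position P S ->
  (forall F, FF F -> is_facet P F /\ adjacent S F) ->
  (forall F, NN F -> is_facet P F /\ adjacent S F) ->
  (forall F, FF F -> NN F -> False) ->
  exists x, V_S P S FF NN x.
Proof.
move=> [[n [p hPp]] [[y0 [hy0P hy0i]] _]].
move=> [[[aS [lS hSineq]] [[qS [hqSS hqSi]] hSnot]] [q [hqi hSq]]].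
move=> hB hFF hNN hdis.
have [sig0 sigP Ssig] := ineq_ev hSineq.
set sig := col_mx (- lS)%:M aS^T in sig0 sigP Ssig.
have Pp : forall k, P (p k) by move=> k; apply/hPp/in_conv_pt.
have Pconv : forall x, P x -> in_conv p x by move=> x /hPp.
have Sq : forall j, S (q j) by move=> j; apply/hSq/in_conv_pt.
have Pq : forall j, P (q j) by move=> j; case: ((Ssig _).1 (Sq j)).
have sigq : forall j, ev sig (q j) = 0 by move=> j; case: ((Ssig _).1 (Sq j)).
have sigp : forall k, 0 <= ev sig (p k) by move=> k; apply: sigP.
have [k0 sk0] : exists k0, 0 < ev sig (p k0).
  case: (pselect (exists k0, 0 < ev sig (p k0))) => // hno; exfalso.
  have h0 : forall k, ev sig (p k) = 0.
    move=> k; apply/eqP; rewrite eq_le sigp andbT leNgt; apply/negP => hk.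
    by apply: hno; exists k.
  move/eqP: sig0; apply; apply: (ev_zero hy0i) => k.
  case: (Pconv _ (hy0P k)) => w [_ [w1 ->]]; rewrite ev_comb //.
  by apply: big1 => j _; rewrite h0 mulr0.
set p0 := p k0.
have Tq : aff_indep (snoc q p0).
  by apply: (aff_ext hqi (f := sig)) => //; rewrite gt_eqF.
set tau := fun i : 'I_d.+1 => interp (snoc q p0)
  (fun k => if unlift ord_max k is Some j then (if j == i then -1 else 0) else 0).
have tauq : forall i j, ev (tau i) (q j) = if j == i then -1 else 0.
  by move=> i j; have := interpE (fun k => if unlift ord_max k is Some j then (if j == i then -1 else 0) else 0) (lift ord_max j) Tq; rewrite snocL liftK.
set ratio := fun (i : 'I_d.+1) (k : 'I_n) => ev (tau i) (p k) / ev sig (p k).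
set ks := fun i => Order.arg_max k0 (fun k => 0 < ev sig (p k)) (ratio i).
have ksP : forall i, 0 < ev sig (p (ks i)) /\
    forall k, 0 < ev sig (p k) -> ratio i k <= ratio i (ks i).
  by move=> i; rewrite /ks; case: arg_maxP.
set f := fun i => ratio i (ks i) *: sig - tau i.
have fE : forall i x, ev (f i) x = ratio i (ks i) * ev sig x - ev (tau i) x.
  by move=> i x; rewrite /f evD evN evZ.
have fq : forall i j, ev (f i) (q j) = (j == i)%:R.
  by move=> i j; rewrite fE sigq tauq mulr0 sub0r; case: eqP => _; rewrite ?opprK ?oppr0.
have fp : forall i k, 0 <= ev (f i) (p k).
  move=> i k; rewrite fE.
  have [hs|hs] := boolP (0 < ev sig (p k)).
    have := (ksP i).2 k hs; rewrite {1}/ratio ler_pdivrMr // => h.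
    by rewrite subr_ge0.
  have s0 : ev sig (p k) = 0.
    by apply/eqP; rewrite eq_le sigp andbT leNgt.
  have : S (p k) by apply/Ssig; split.
  move=> /hSq [w [w0 [w1 hw]]].
  rewrite s0 mulr0 sub0r oppr_ge0 hw ev_comb //.
  rewrite (bigD1 i) //= tauq eqxx big1 ?addr0.
    by rewrite mulrN1 oppr_le0.
  by move=> j /negbTE hj; rewrite tauq hj mulr0.
have fP : forall i x, P x -> 0 <= ev (f i) x.
  by move=> i x /Pconv hx; apply: conv_ev hx _.
have ftight : forall i, ev (f i) (p (ks i)) = 0.
  move=> i; rewrite fE /ratio divfK ?subrr //.
  by rewrite gt_eqF //; case: (ksP i).
set Fi := fun i (x : 'rV[R]_d.+1) => P x /\ ev (f i) x = 0.
have fsig : forall i, f i != 0.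
  move=> i; apply/eqP => h; have := fq i i; rewrite h ev0 eqxx => /eqP.
  by rewrite eq_sym oner_eq0.
have Fface : forall i, face_ineq P (Fi i) (dsubmx (f i))^T (- usubmx (f i) 0 0).
  move=> i; apply: ev_ineq_face.
  - apply/eqP => h; have := ev_const (q i) (p (ks i)) h.
    by rewrite fq ftight eqxx => /eqP; rewrite oner_eq0.
  - exact: fP.
  - by move=> x; split.
have H2 : forall i (y : 'I_d.+1 -> 'rV[R]_d.+1), aff_indep y ->
    (forall j, ev (f i) (y j) = 0 /\ ev sig (y j) = 0) -> False.
  move=> i y hyi hy.
  have Ty : aff_indep (snoc y p0).
    by apply: (aff_ext hyi (f := sig)) => [j|]; [case: (hy j)|rewrite gt_eqF].
  set h := ev sig p0 *: f i - ev (f i) p0 *: sig.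
  have hE : forall x, ev h x = ev sig p0 * ev (f i) x - ev (f i) p0 * ev sig x.
    by move=> x; rewrite /h evD evN !evZ.
  have h0 : h = 0.
    apply: (ev_zero Ty) => k; rewrite hE.
    case: (unliftP ord_max k) => [j ->|->]; rewrite ?snocL ?snocM.
      by case: (hy j) => -> ->; rewrite !mulr0 subrr.
    by rewrite mulrC subrr.
  have := hE (q i); rewrite h0 ev0 fq eqxx sigq mulr0 subr0 mulr1 => /eqP.
  by rewrite eq_sym gt_eqF.
have Ffacet : forall i, is_facet P (Fi i).
  move=> i; split; first by exists (dsubmx (f i))^T, (- usubmx (f i) 0 0).
  split.
    exists (fun j => if j == i then p (ks i) else q j); split.
      move=> j; case: eqP => [_|/eqP hji]; split => //.
      by rewrite fq (negbTE hji).
    apply: (aff_rep (f := sig) hqi) => //.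
    by rewrite gt_eqF //; case: (ksP i).
  move=> [y [hyF hyi]].
  have := ev_zero hyi (fun k => (hyF k).2) => h.
  by move/eqP: (fsig i); rewrite h.
have Fadj : forall i, adjacent S (Fi i).
  move=> i; rewrite /adjacent /=; split.
    exists (fun j => q (lift i j)); split; last exact: aff_sub.
    move=> j; split => //; split => //.
    by rewrite fq eq_sym (negbTE (neq_lift i j)).
  move=> [y [hy hyi]]; apply: (H2 i y hyi) => j; split.
    by case: (hy j) => _ [].
  by case: (hy j) => /Ssig [].
have Finj : injective Fi.
  move=> i j hij; apply/eqP; apply: contraT => hne.
  have : Fi j (q i) by split => //; rewrite fq (negbTE hne).
  rewrite -hij => -[_]; rewrite fq eqxx => /eqP; by rewrite oner_eq0.
have [v [hvF hvS]] := hB Fi Finj (fun i => conj (Ffacet i) (Fadj i)).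
have fv : forall i, ev (f i) v = 0.
  by move=> i; have := hvF i _ _ (Fface i); rewrite evE => ->; rewrite subrr.
have sigv : ev sig v < 0.
  by have := hvS _ _ hSineq; rewrite ev_ineq subr_lt0.
have Tv : aff_indep (snoc q v).
  by apply: (aff_ext hqi (f := sig)) => //; rewrite lt_eqF.
have decomp : forall z x, ev z x = \sum_(i < d.+1) ev z (q i) * ev (f i) x
    + ev z v / ev sig v * ev sig x.
  move=> z x.
  set g := \sum_(i < d.+1) ev z (q i) *: f i + (ev z v / ev sig v) *: sig.
  have gE : forall y, ev g y = \sum_(i < d.+1) ev z (q i) * ev (f i) y
      + ev z v / ev sig v * ev sig y.
    by move=> y; rewrite /g evD evS evZ; under eq_bigr => i _ do rewrite evZ.
  have : z - g = 0.
    apply: (ev_zero Tv) => k; rewrite evD evN gE; apply/eqP; rewrite subr_eq0; apply/eqP.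
    case: (unliftP ord_max k) => [j ->|->]; rewrite ?snocL ?snocM.
      rewrite sigq mulr0 addr0 (bigD1 j) //= fq eqxx mulr1 big1 ?addr0 //.
      by move=> i /negbTE hi; rewrite fq eq_sym hi mulr0.
    rewrite big1 ?add0r ?divfK ?lt_eqF //.
    by move=> i _; rewrite fv mulr0.
  by move=> /eqP; rewrite subr_eq0 => /eqP hz; rewrite {1}hz gE.
set Gam := fun (K : {set 'I_n}) (z : 'cV[R]_(1 + d.+1)) =>
  (forall k, (k \in K) <-> ev z (p k) = 0) /\ ev z v = 1 /\
  (forall k, 0 <= ev z (p k)) /\ has_aff_pts (fun x => P x /\ ev z x = 0) d.+1.
set gsel := fun K j => match pselect (exists z, Gam K z) with
  | left h => ev (proj1_sig (cid h)) (q j) | right _ => 0 end.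
set M := \sum_(K : {set 'I_n}) \sum_(j < d.+1) `|gsel K j|.
have M0 : 0 <= M by apply: sumr_ge0 => K _; apply: sumr_ge0.
have Mb : forall K z, Gam K z -> forall j, ev z (q j) <= M.
  move=> K z hz j.
  have hgs : gsel K j = ev z (q j).
    rewrite /gsel; case: pselect => [h|hn]; last by exfalso; apply: hn; exists z.
    case: (cid h) => z' hz' /=.
    case: hz' => [hK' [hv' [hp' [y' [hy' hyi']]]]].
    case: hz => [hK [hv [hp _]]].
    have zy : forall k, ev z (y' k) = 0.
      move=> k; case: (hy' k) => Py ey.
      by apply: (conv_ev0 (Pconv _ Py) hp' ey) => k' /hK' /hK.
    have Ty : aff_indep (snoc y' v).
      apply: (aff_ext hyi' (f := z')) => [k|]; first by case: (hy' k).
      by rewrite hv' oner_eq0.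
    have : z' - z = 0.
      apply: (ev_zero Ty) => k; rewrite evD evN.
      case: (unliftP ord_max k) => [k' ->|->]; rewrite ?snocL ?snocM.
        by rewrite zy; case: (hy' k') => _ ->; rewrite subrr.
      by rewrite hv hv' subrr.
    by move/eqP; rewrite subr_eq0 => /eqP ->.
  rewrite -hgs; apply: le_trans (ler_norm _) _.
  rewrite /M (bigD1 K) //= (bigD1 j) //= -addrA lerDl.
  by apply: addr_ge0; apply: sumr_ge0 => // K' _; apply: sumr_ge0.
have Geq : forall F G : pset R d.+1, (forall x, G x <-> F x) -> G = F.
  by move=> F G h; apply: funext => x; apply: propext.
have classify : forall (G : pset R d.+1) (z : 'cV[R]_(1 + d.+1)), z != 0 ->
    (forall x, P x -> 0 <= ev z x) -> (forall x, G x <-> P x /\ ev z x = 0) ->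
    has_aff_pts G d.+1 ->
    [\/ G = S /\ exists2 c, 0 < c & forall x, ev z x = c * ev sig x,
        exists i, G = Fi i /\ exists2 c, 0 < c & forall x, ev z x = c * ev (f i) x |
        [/\ G <> S, forall i, G <> Fi i, ~ adjacent S G, 0 < ev z v &
            forall j, ev z (q j) <= M * ev z v]].
  move=> G z z0 zP Ge [yG [hyG hyGi]].
  set g := fun j => ev z (q j).
  have g0 : forall j, 0 <= g j by move=> j; apply: zP.
  set ka := ev z v / ev sig v.
  have dz := decomp z.
  have split0 : 0 <= ka -> forall y, P y -> ev z y = 0 ->
      (forall i, g i * ev (f i) y = 0) /\ ka * ev sig y = 0.
    move=> hk y Py; rewrite dz => /eqP.
    have s1 : 0 <= \sum_(i < d.+1) ev z (q i) * ev (f i) y.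
      by apply: sumr_ge0 => i _; apply: mulr_ge0; [apply: g0|apply: fP].
    have s2 : 0 <= ka * ev sig y by apply: mulr_ge0 => //; apply: sigP.
    rewrite paddr_eq0 // => /andP [/eqP hs /eqP hk']; split => // i.
    apply: (psumr_eq0P _ hs) => // i' _.
    by apply: mulr_ge0; [apply: g0|apply: fP].
  have kpos : ev z v < 0 -> 0 < ka.
    by move=> h; rewrite /ka -mulrNN -invrN; apply: divr_gt0; rewrite oppr_gt0.
  have kneg : 0 < ev z v -> ka < 0.
    by move=> h; rewrite /ka pmulr_rlt0 // invr_lt0.
  have knn : ev z v <= 0 -> 0 <= ka.
    by move=> h; rewrite /ka mulr_le0 // ltW // invr_lt0.
  case: (pselect (exists i k, i != k /\ 0 < g i /\ 0 < g k)) => [[i [k [ik [gi gk]]]]|hno].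
    have [hzv|hzv] := leP (ev z v) 0.
      exfalso.
      have fy : forall m, 0 < g m -> forall j, ev (f m) (yG j) = 0.
        move=> m gm j; have /Ge [Py ey] := hyG j.
        have [h _] := split0 (knn hzv) _ Py ey.
        by move/eqP: (h m); rewrite mulf_eq0 gt_eqF //= => /eqP.
      have Ty : aff_indep (snoc yG (q i)).
        by apply: (aff_ext hyGi (f := f i)) => [|]; [apply: fy|rewrite fq eqxx oner_eq0].
      have : f k = 0.
        apply: (ev_zero Ty) => k'.
        case: (unliftP ord_max k') => [j ->|->]; rewrite ?snocL ?snocM.
          exact: fy.
        by rewrite fq (negbTE ik).
      by move/eqP; rewrite (negbTE (fsig k)).
    apply: Or33; split => //.
    - move=> hGS; have : G (q i) by rewrite hGS.
      by case/Ge => _ h; move: gi; rewrite /g h ltxx.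
    - move=> m hGF.
      have [r [hr gr]] : exists r, r != m /\ 0 < g r.
        by case: (eqVneq i m) => [<-|him]; [exists k; rewrite eq_sym | exists i].
      have : G (q r) by rewrite hGF; split => //; rewrite fq (negbTE hr).
      by case/Ge => _ h; move: gr; rewrite /g h ltxx.
    - move=> [[y [hy hyi]] _].
      have fy : forall m, 0 < g m -> forall j, ev (f m) (y j) = 0.
        move=> m gm j; case: (hy j) => /Ssig [Py sy] /Ge [_ ey].
        move: ey; rewrite dz sy mulr0 addr0 => ey.
        have hnn : forall i', true -> 0 <= ev z (q i') * ev (f i') (y j).
          by move=> i' _; apply: mulr_ge0; [apply: g0|apply: fP].
        have := psumr_eq0P hnn ey; move=> /(_ m isT) /eqP.
        by rewrite mulf_eq0 gt_eqF //= => /eqP.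
      have T1 : aff_indep (snoc y (q i)).
        by apply: (aff_ext hyi (f := f i)) => [|]; [apply: fy|rewrite fq eqxx oner_eq0].
      have T2 : aff_indep (snoc (snoc y (q i)) (q k)).
        apply: (aff_ext T1 (f := f k)) => [j|]; last by rewrite fq eqxx oner_eq0.
        case: (unliftP ord_max j) => [j' ->|->]; rewrite ?snocL ?snocM.
          exact: fy.
        by rewrite fq (negbTE ik).
      have : sig = 0.
        apply: (ev_zero T2) => j.
        case: (unliftP ord_max j) => [j' ->|->]; rewrite ?snocL ?snocM //.
        case: (unliftP ord_max j') => [j'' ->|->]; rewrite ?snocL ?snocM //.
        by case: (hy j'') => /Ssig [].
      by move/eqP; rewrite (negbTE sig0).
    - move=> j.
      set zh := (ev z v)^-1 *: z.
      have zhE : forall x, ev zh x = ev z x / ev z v by move=> x; rewrite /zh evZ mulrC.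
      have hG : Gam [set k | ev zh (p k) == 0] zh.
        split; first by move=> k'; rewrite inE; split => /eqP.
        split; first by rewrite zhE divff // gt_eqF.
        split; first by move=> k'; rewrite zhE; apply: divr_ge0; [exact: zP (Pp k') | exact: ltW].
        exists yG; split => // j'; have /Ge [Py ey] := hyG j'; split => //.
        by rewrite zhE ey mul0r.
      by have := Mb _ _ hG j; rewrite zhE ler_pdivrMr.
  have single : (exists i, 0 < g i /\ forall j, j != i -> g j = 0) \/ (forall j, g j = 0).
    case: (pselect (exists i, 0 < g i)) => [[i gi]|hn].
      left; exists i; split => // j hj; apply/eqP; rewrite eq_le g0 andbT leNgt.
      by apply/negP => gj; apply: hno; exists i, j; rewrite eq_sym.
    right => j; apply/eqP; rewrite eq_le g0 andbT leNgt.
    by apply/negP => gj; apply: hn; exists j.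
  case: single => [[i [gi gj]]|gall].
    have dz' : forall x, ev z x = g i * ev (f i) x + ka * ev sig x.
      move=> x; rewrite dz (bigD1 i) //= big1 ?addr0 //.
      by move=> j hj; rewrite -/(g j) gj ?mul0r.
    case: (ltrgtP (ev z v) 0) => hzv.
    - exfalso; apply: (H2 i yG hyGi) => j.
      have /Ge [Py ey] := hyG j.
      have [h1 h2] := split0 (ltW (kpos hzv)) _ Py ey.
      move/eqP: (h1 i); rewrite mulf_eq0 gt_eqF //= => /eqP ->; split => //.
      by move/eqP: h2; rewrite mulf_eq0 gt_eqF ?kpos //= => /eqP.
    - exfalso; have := zP _ (Pp (ks i)); rewrite dz' ftight mulr0 add0r.
      rewrite leNgt => /negP; apply; rewrite nmulr_rlt0 ?kneg //.
      by case: (ksP i).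
    - apply: Or32; exists i; split.
        apply: Geq => x; rewrite Ge dz' /ka hzv mul0r mul0r addr0.
        split => -[Px h]; split => //.
          by move/eqP: h; rewrite mulf_eq0 gt_eqF //= => /eqP.
        by rewrite h mulr0.
      by exists (g i) => // x; rewrite dz' /ka hzv !mul0r addr0.
  have dz' : forall x, ev z x = ka * ev sig x.
    move=> x; rewrite dz big1 ?add0r //.
    by move=> j _; rewrite -/(g j) gall mul0r.
  case: (ltrgtP (ev z v) 0) => hzv.
  - apply: Or31; split; last by exists ka => //; apply: kpos.
    apply: Geq => x; rewrite Ge Ssig dz'.
    split => -[Px h]; split => //.
      by move/eqP: h; rewrite mulf_eq0 gt_eqF ?kpos //= => /eqP.
    by rewrite h mulr0.
  - exfalso; have := zP _ (Pp k0); rewrite dz'.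
    rewrite leNgt => /negP; apply; rewrite nmulr_rlt0 ?kneg //.
  - exfalso; move/eqP: z0; apply; apply: (ev_zero Tq) => k.
    by rewrite dz' /ka hzv !mul0r.
set t : R := (2 * (1 + M))^-1.
have M1 : 0 < 1 + M by lra.
have t0 : 0 < t by rewrite /t invr_gt0 mulr_gt0.
have ht : t * (1 + M) = 2^-1.
  by rewrite /t invfM -mulrA mulVf ?mulr1 // gt_eqF.
have t1 : t <= 2^-1.
  have : t * 1 <= t * (1 + M) by apply: ler_wpM2l; [apply: ltW | lra].
  by rewrite mulr1 ht.
have h2 : 0 < 2^-1 :> R by rewrite invr_gt0 ltr0n.
have h2' : 2^-1 < 1 :> R by rewrite invf_lt1 // ltr1n.
set dl : R := t / (d.+1)%:R.
have dl0 : 0 < dl by rewrite /dl divr_gt0 // ltr0n.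
have sdl : \sum_(j < d.+1) dl = t.
  by rewrite sumr_const card_ord -mulr_natr /dl divfK // pnatr_eq0.
set mu := fun j : 'I_d.+1 => if pselect (NN (Fi j)) then - dl
  else if pselect (FF (Fi j)) then 0 else dl.
have mub : forall j, - dl <= mu j /\ mu j <= dl.
  by move=> j; rewrite /mu /=; destruct (pselect (NN (Fi j))); [|destruct (pselect (FF (Fi j)))]; simpl; split; lra.
set smu := \sum_(j < d.+1) mu j.
have smub : smu <= t by rewrite /smu -sdl; apply: ler_sum => j _; case: (mub j).
set x := (1 - smu) *: v + \sum_(j < d.+1) mu j *: q j.
have evx : forall z, ev z x = (1 - smu) * ev z v + \sum_(j < d.+1) mu j * ev z (q j).
  move=> z.
  have hx : x = \sum_(k < d.+2) snoc mu (1 - smu) k *: snoc q v k.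
    rewrite sumv_snoc !snocM addrC /x; congr (_ + _).
    by apply: eq_bigr => j _; rewrite !snocL.
  rewrite hx ev_comb; last first.
    rewrite sum_snoc snocM (eq_bigr (fun j => mu j)); last by move=> j _; rewrite snocL.
    by rewrite -/smu addrC subrK.
  rewrite sum_snoc snocM snocM addrC; congr (_ + _).
  by apply: eq_bigr => j _; rewrite !snocL.
have fx : forall i, ev (f i) x = mu i.
  move=> i; rewrite evx fv mulr0 add0r (bigD1 i) //= fq eqxx mulr1 big1 ?addr0 //.
  by move=> j /negbTE hj; rewrite fq hj mulr0.
have sigx : ev sig x < 0.
  rewrite evx big1 ?addr0; last by move=> j _; rewrite sigq mulr0.
  by rewrite pmulr_rlt0 //; lra.
have FiS : forall i, Fi i <> S.
  move=> i hS'; have : Fi i (p (ks i)) by split.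
  rewrite hS' => /Ssig [_]; case: (ksP i) => h _ e; by move: h; rewrite e ltxx.
exists x => G hG.
have hGpts : has_aff_pts G d.+1 by case: hG => _ [].
split; [|split].
- move=> hNS a l hal; have [z0 zP Ge] := ineq_ev hal.
  rewrite -subr_lt0 -ev_ineq.
  case: (classify _ _ z0 zP Ge hGpts) => [[hGS [c c0 hc]]|[i [hGF [c c0 hc]]]|[hGS hGF hadj hzv hb]].
  + by rewrite hc pmulr_rlt0.
  + rewrite hc fx pmulr_rlt0 // /mu /=; case: (pselect (NN (Fi i))) => [_|hn] /=; first by lra.
    exfalso; case: hNS => [|e]; first by rewrite hGF.
    by apply: (FiS i); rewrite -hGF.
  + exfalso; case: hNS => [hN|//]; apply: hadj; exact: (hNN _ hN).2.
- move=> hF a l hal; have [z0 zP Ge] := ineq_ev hal.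
  apply/eqP; rewrite -subr_eq0 -ev_ineq; apply/eqP.
  case: (classify _ _ z0 zP Ge hGpts) => [[hGS [c c0 hc]]|[i [hGF [c c0 hc]]]|[hGS hGF hadj hzv hb]].
  + exfalso; have := (hFF _ hF).2; rewrite hGS => -[_]; apply.
    by exists q; split => // j; split.
  + rewrite hc fx /mu /=; case: (pselect (NN (Fi i))) => [hn|_] /=.
      by exfalso; apply: (hdis G) => //; rewrite hGF.
    by case: (pselect (FF (Fi i))) => [_|hn] /=; [rewrite mulr0 | exfalso; apply: hn; rewrite -hGF].
  + by exfalso; apply: hadj; exact: (hFF _ hF).2.
- move=> [hN [hS' hF']] a l hal; have [z0 zP Ge] := ineq_ev hal.
  rewrite -subr_gt0 -ev_ineq.
  case: (classify _ _ z0 zP Ge hGpts) => [[hGS [c c0 hc]]|[i [hGF [c c0 hc]]]|[hGS hGF hadj hzv hb]].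
  + by exfalso; apply: hS'.
  + rewrite hc fx /mu /=; case: (pselect (NN (Fi i))) => [hn|_] /=.
      by exfalso; apply: hN; rewrite hGF.
    case: (pselect (FF (Fi i))) => [hn|_] /=; last by apply: mulr_gt0.
    by exfalso; apply: hF'; rewrite hGF.
  + set z := col_mx (- l)%:M a^T in zP hzv hb *; rewrite evx.
    set e := ev z v.
    have s2 : - (t * (M * e)) <= \sum_(j < d.+1) mu j * ev z (q j).
      rewrite -sdl mulr_suml -sumrN; apply: ler_sum => j _.
      have gj0 : 0 <= ev z (q j) by apply: zP.
      have gjb := hb j.
      case: (mub j) => m1 m2.
      have : - dl * ev z (q j) <= mu j * ev z (q j) by apply: ler_wpM2r.
      have : - dl * (M * e) <= - dl * ev z (q j).
        by rewrite !mulNr lerN2; apply: ler_wpM2l; [apply: ltW|].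
      rewrite mulNr; lra.
    have s1 : (1 - t) * e <= (1 - smu) * e by apply: ler_wpM2r; [apply: ltW | lra].
    have key : (1 - t) * e - t * (M * e) = e * (1 - t * (1 + M)) by ring.
    rewrite ht in key.
    have : 0 < e * (1 - 2^-1) by apply: mulr_gt0 => //; lra.
    lra.
Qed.


Theorem lemma2p8 (R : realType) (d : nat) (P S : pset R d)
  (FF NN : pset R d -> Prop) :
  is_d_polytope P ->
  is_simplex_facet P S ->
  bounded_position P S ->
  (forall F, FF F -> is_facet P F /\ adjacent S F) ->
  (forall F, NN F -> is_facet P F /\ adjacent S F) ->
  (forall F, FF F -> NN F -> False) ->
  exists x, V_S P S FF NN x.
Proof.
case: d P S FF NN => [|d] P S FF NN hP hS.
  exfalso; case: hS => [[[a [l [a0 _]]] _] _].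
  by move/eqP: a0; apply; apply/rowP => -[].
exact: main.
Qed.
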